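(* There is no linear isometry $\phi:\ell^\infty\to\ell^\infty$ whose image is contained in $L(\mathbb{N}\cup\{\omega\})\cup\{0\}$. That is, the set of bounded real sequences having at most countably many accumulation points, together with $0$, does not contain an isometric copy of $\ell^\infty$.
   Context: $\ell^\infty$ is the Banach space of bounded real sequences with the sup norm. For $x\in\ell^\infty$, $L_x$ denotes the set of accumulation points (subsequential limits) of $x$. $\omega$ denotes the cardinality of $\mathbb{N}$. For a set $A$ of cardinalities, $L(A)=\{x\in\ell^\infty: |L_x|\in A\}$; so $L(\mathbb{N}\cup\{\omega\})$ is the set of $x\in\ell^\infty$ with $L_x$ finite or countably infinite. *)

(* Defs.v *)
From Stdlib Require Import Reals.
Open Scope R_scope.

Definition bounded_seq (x : nat -> R) : Prop :=
  exists M : R, forall n : nat, Rabs (x n) <= M.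

Definition is_supnorm (x : nat -> R) (s : R) : Prop :=
  is_lub (fun r => exists n : nat, r = Rabs (x n)) s.

Definition acc_point (x : nat -> R) (a : R) : Prop :=
  forall eps : R, 0 < eps -> forall N : nat, exists n : nat, (N <= n)%nat /\ Rabs (x n - a) < eps.

Definition at_most_countable (A : R -> Prop) : Prop :=
  exists f : R -> nat, forall a b : R, A a -> A b -> f a = f b -> a = b.

(* x \in L(N \cup {omega}) : the set L_x is finite or countably infinite. *)
Definition in_L_countable (x : nat -> R) : Prop :=
  at_most_countable (acc_point x).

(* phi is a linear map l^infty -> l^infty (conditions only on bounded inputs). *)
Definition linear_on_linf (phi : (nat -> R) -> (nat -> R)) : Prop :=
  (forall x, bounded_seq x -> bounded_seq (phi x)) /\
  (forall x y : nat -> R, bounded_seq x -> bounded_seq y -> forall a b : R,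
      phi (fun n => a * x n + b * y n) = (fun n => a * phi x n + b * phi y n)).

Definition isometry_on_linf (phi : (nat -> R) -> (nat -> R)) : Prop :=
  forall x, bounded_seq x -> forall s, is_supnorm x s -> is_supnorm (phi x) s.

(* Main.v *)
Require Import Defs.
From Stdlib Require Import Reals Lra Lia ClassicalEpsilon Classical FunctionalExtensionality.
Open Scope R_scope.

Lemma Rabs_le_iff a b : Rabs a <= b <-> -b <= a <= b.
Proof. unfold Rabs; destruct (Rcase_abs a); split; intros; lra. Qed.

Definition sgn (b : bool) : R := if b then 1 else -1.
Fixpoint bit (j n : nat) : bool :=
  match j with O => Nat.even n | S j => bit j (Nat.div2 n) end.
Definition rj (j : nat) : nat -> R := fun n => sgn (bit j n).
Definition c (j : nat) : R := (/4) ^ (S j).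
Definition tail (N : nat) : R := /3 * (/4) ^ N.
Fixpoint psum (e : nat -> R) (N : nat) : R :=
  match N with O => 0 | S N => psum e N + c N * e N end.

Lemma pow4_pos n : 0 < (/4) ^ n.
Proof. apply pow_lt; lra. Qed.
Lemma c_pos j : 0 < c j.
Proof. apply pow4_pos. Qed.
Lemma tail_pos N : 0 < tail N.
Proof. unfold tail; pose proof (pow4_pos N); lra. Qed.
Lemma tail_S N : tail N = c N + tail (S N).
Proof. unfold tail, c; simpl; field. Qed.
Lemma tail_Sc N : tail (S N) = c N / 3.
Proof. unfold tail, c; simpl; field. Qed.
Lemma c_S j : c (S j) = c j / 4.
Proof. unfold c; simpl; field. Qed.
Lemma tail0 : tail 0 = /3.
Proof. unfold tail; simpl; lra. Qed.

Lemma sgn_abs b : Rabs (sgn b) <= 1.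
Proof. destruct b; simpl; apply Rabs_le_iff; lra. Qed.
Lemma rj_abs j n : Rabs (rj j n) <= 1.
Proof. apply sgn_abs. Qed.

Lemma mono_le (f : nat -> R) : (forall n, f n <= f (S n)) ->
  forall n m, (n <= m)%nat -> f n <= f m.
Proof. intros H n m Hnm; induction Hnm; [lra| specialize (H m); lra]. Qed.

Lemma c_mono i i' : (i <= i')%nat -> c i' <= c i.
Proof.
  intro H. assert (- c i <= - c i'); [|lra].
  apply (mono_le (fun i => - c i)); auto.
  intro n; rewrite c_S; pose proof (c_pos n); lra.
Qed.

Lemma psum_bound e : (forall j, Rabs (e j) <= 1) -> forall N,
  Rabs (psum e N) <= tail 0 - tail N.
Proof.
  intros He N; induction N; simpl.
  - rewrite Rabs_R0; lra.
  - rewrite tail_S in *. pose proof (He N) as H. pose proof (c_pos N).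
    apply Rabs_le_iff in H; apply Rabs_le_iff in IHN; apply Rabs_le_iff.
    rewrite (tail_S N) in IHN. nra.
Qed.

Lemma series_exists (e : nat -> R) (He : forall j, Rabs (e j) <= 1) :
  {S | forall N, Rabs (S - psum e N) <= tail N}.
Proof.
  set (L := fun N => psum e N - tail N).
  set (U := fun N => psum e N + tail N).
  assert (HL : forall N, L N <= L (S N)).
  { intro N; unfold L; simpl; rewrite (tail_S N).
    pose proof (He N) as H; apply Rabs_le_iff in H; pose proof (c_pos N); nra. }
  assert (HU : forall N, - U N <= - U (S N)).
  { intro N; unfold U; simpl; rewrite (tail_S N).
    pose proof (He N) as H; apply Rabs_le_iff in H; pose proof (c_pos N); nra. }
  assert (HLU : forall N M, L N <= U M).
  { intros N M. pose proof (mono_le L HL N (max N M) ltac:(lia)).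
    pose proof (mono_le (fun N => - U N) HU M (max N M) ltac:(lia)).
    simpl in *. pose proof (tail_pos (max N M)). unfold L, U in *. lra. }
  destruct (completeness (fun r => exists N, r = L N)) as [m [Hub Hlub]].
  - exists (U O). intros r [N ->]. apply HLU.
  - exists (L O); eauto.
  - exists m. intro N. apply Rabs_le_iff.
    assert (L N <= m) by (apply Hub; eauto).
    assert (m <= U N) by (apply Hlub; intros r [N' ->]; apply HLU).
    unfold L, U in *; lra.
Qed.

Definition ser (e : nat -> R) (He : forall j, Rabs (e j) <= 1) : R :=
  proj1_sig (series_exists e He).
Lemma ser_spec e He N : Rabs (ser e He - psum e N) <= tail N.
Proof. unfold ser; destruct (series_exists e He); simpl; auto. Qed.

Lemma pattern_exists N : forall p : nat -> bool, exists n, forall j, (j < N)%nat -> bit j n = p j.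
Proof.
  induction N; intros p.
  - exists O; intros; lia.
  - destruct (IHN (fun j => p (S j))) as [n Hn].
    exists (if p O then 2 * n else 2 * n + 1)%nat.
    intros [|j] Hj; cbn [bit].
    + destruct (p O); [apply Nat.even_even| apply Nat.even_odd].
    + replace (Nat.div2 (if p O then 2 * n else 2 * n + 1)%nat) with n.
      * apply Hn; lia.
      * destruct (p O); [rewrite Nat.div2_double| rewrite Nat.div2_odd']; auto.
Qed.
Definition one : nat -> R := fun _ => 1.
Definition ptrue : nat -> bool := fun _ => true.

Fixpoint Zs (N : nat) (p : nat -> bool) : nat -> R :=
  match N with O => fun _ => 2 | S N => fun n => Zs N p n + c N * sgn (p N) * rj N n end.
Fixpoint Bs (N : nat) : R := match N with O => 2 | S N => Bs N + c N end.
Fixpoint Q (u : R) (s : nat -> R) (p : nat -> bool) (N : nat) : R :=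
  match N with O => 2 * u | S N => Q u s p N + c N * sgn (p N) * s N end.

Lemma Zs_abs N p n : Rabs (Zs N p n) <= Bs N.
Proof.
  induction N; simpl.
  - rewrite Rabs_pos_eq; lra.
  - pose proof (c_pos N). pose proof (sgn_abs (p N)). pose proof (rj_abs N n).
    apply Rabs_le_iff in H0; apply Rabs_le_iff in H1; apply Rabs_le_iff in IHN.
    apply Rabs_le_iff.
    destruct (p N); simpl in *; nra.
Qed.

Lemma Zs_match N p n : (forall j, (j < N)%nat -> bit j n = p j) -> Zs N p n = Bs N.
Proof.
  induction N; intro H; simpl; auto.
  rewrite IHN by (intros; apply H; lia). unfold rj; rewrite H by lia.
  destruct (p N); simpl; ring.
Qed.

Lemma Zs_true N n : Zs N ptrue n = 2 + psum (fun j => rj j n) N.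
Proof. induction N; simpl; [ring|]. rewrite IHN; simpl; ring. Qed.

Lemma bnd_of (z : nat -> R) B : (forall n, Rabs (z n) <= B) -> bounded_seq z.
Proof. intros H; exists B; auto. Qed.

Lemma Q_approx u s p : Rabs u <= 1 -> (forall j, Rabs (s j) <= 1) -> forall N,
  Rabs (Q u s ptrue N - (2 + psum (fun j => sgn (p j)) N)) <= Bs N - Q u s p N /\
  Rabs (Q u s ptrue N + (2 + psum (fun j => sgn (p j)) N)) <= Bs N + Q u s p N.
Proof.
  intros Hu Hs N. apply Rabs_le_iff in Hu. induction N; simpl.
  - split; apply Rabs_le_iff; lra.
  - destruct IHN as [H1 H2]. apply Rabs_le_iff in H1; apply Rabs_le_iff in H2.
    pose proof (Hs N) as H; apply Rabs_le_iff in H. pose proof (c_pos N).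
    unfold ptrue in *; destruct (p N); simpl; split; apply Rabs_le_iff; nra.
Qed.

Lemma sup_exists (z : nat -> R) B : (forall n, Rabs (z n) <= B) ->
  {s | is_supnorm z s}.
Proof.
  intro H. apply completeness.
  - exists B; intros r [n ->]; auto.
  - exists (Rabs (z O)); eauto.
Qed.

Lemma phi_bound phi : isometry_on_linf phi -> forall z B,
  (forall n, Rabs (z n) <= B) -> forall k, Rabs (phi z k) <= B.
Proof.
  intros Hiso z B H k. destruct (sup_exists z B H) as [s Hs].
  pose proof (Hiso z (bnd_of z B H) s Hs) as [Hub _].
  destruct Hs as [_ Hl].
  assert (s <= B) by (apply Hl; intros r [n ->]; auto).
  assert (Rabs (phi z k) <= s) by (apply Hub; eauto). lra.
Qed.

Lemma phi_witness phi : isometry_on_linf phi -> forall z B n0 d,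
  (forall n, Rabs (z n) <= B) -> Rabs (z n0) = B -> 0 < d ->
  exists k, Rabs (phi z k) > B - d.
Proof.
  intros Hiso z B n0 d H H0 Hd. destruct (sup_exists z B H) as [s Hs].
  pose proof (Hiso z (bnd_of z B H) s Hs) as [_ Hl2].
  destruct Hs as [Hub Hl].
  assert (s <= B) by (apply Hl; intros r [n ->]; auto).
  assert (B <= s) by (rewrite <- H0; apply Hub; eauto).
  apply NNPP; intro Hn.
  assert (s <= B - d); [|lra].
  apply Hl2. intros r [k ->]. apply Rnot_gt_le. intro Hk. apply Hn; eauto.
Qed.
Lemma one_bnd : forall n, Rabs (one n) <= 1.
Proof. intro; unfold one; rewrite Rabs_R1; lra. Qed.

Lemma phi_Zs phi : linear_on_linf phi -> forall N p,
  phi (Zs N p) = fun k => Q (phi one k) (fun j => phi (rj j) k) p N.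
Proof.
  intros [Hb Hl] N p. induction N.
  - simpl. replace (fun _ : nat => 2) with (fun n => 2 * one n + 0 * one n)
      by (apply functional_extensionality; intro; unfold one; ring).
    rewrite Hl by (apply (bnd_of _ 1 one_bnd)).
    apply functional_extensionality; intro; ring.
  - change (Zs (S N) p) with (fun n => Zs N p n + c N * sgn (p N) * rj N n).
    replace (fun n => Zs N p n + c N * sgn (p N) * rj N n)
      with (fun n => 1 * Zs N p n + (c N * sgn (p N)) * rj N n)
      by (apply functional_extensionality; intro; ring).
    rewrite Hl by (first [apply (bnd_of _ _ (Zs_abs N p)) | apply (bnd_of _ _ (rj_abs N))]).
    rewrite IHN. apply functional_extensionality; intro; simpl; ring.
Qed.

Definition ch (t : nat -> R) (i : nat) (w : R) : bool :=
  if Rle_dec (t i) (2 + w) then true else false.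
Fixpoint W (t : nat -> R) (m : nat) : R :=
  match m with O => 0 | S m => W t m + c m * sgn (ch t m (W t m)) end.
Definition epsp (t : nat -> R) (j : nat) : bool := ch t j (W t j).

Lemma psum_W t m : psum (fun j => sgn (epsp t j)) m = W t m.
Proof. induction m; simpl; auto. rewrite IHm; reflexivity. Qed.

Definition Vof (t : nat -> R) : R := 2 + ser (fun j => sgn (epsp t j)) (fun j => sgn_abs _).

Lemma V_gap t i : Rabs (Vof t - t i) >= c i / 2.
Proof.
  pose proof (ser_spec (fun j => sgn (epsp t j)) (fun j => sgn_abs _) (S i)) as H.
  rewrite psum_W, tail_Sc in H. simpl in H. unfold Vof.
  apply Rabs_le_iff in H. pose proof (c_pos i).
  unfold Rabs; destruct (Rcase_abs _);
  unfold ch in H; destruct (Rle_dec (t i) (2 + W t i)); simpl in H; lra.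
Qed.

Lemma V_pos t : Vof t >= 5/3.
Proof.
  pose proof (ser_spec (fun j => sgn (epsp t j)) (fun j => sgn_abs _) O) as H.
  simpl in H. rewrite tail0 in H. apply Rabs_le_iff in H. unfold Vof. lra.
Qed.

Lemma V_approx t N : Rabs (Vof t - (2 + psum (fun j => sgn (epsp t j)) N)) <= tail N.
Proof.
  pose proof (ser_spec (fun j => sgn (epsp t j)) (fun j => sgn_abs _) N) as H.
  unfold Vof. replace (2 + ser (fun j : nat => sgn (epsp t j)) (fun j : nat => sgn_abs (epsp t j)) -
     (2 + psum (fun j : nat => sgn (epsp t j)) N)) with
     (ser (fun j : nat => sgn (epsp t j)) (fun j : nat => sgn_abs (epsp t j)) -
     psum (fun j : nat => sgn (epsp t j)) N) by ring. auto.
Qed.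
Lemma Rabs_lt_iff a b : Rabs a < b <-> -b < a < b.
Proof. unfold Rabs; destruct (Rcase_abs a); split; intros; lra. Qed.

Lemma Bs_ge2 N : 2 <= Bs N.
Proof. induction N; simpl; [lra|]. pose proof (c_pos N); lra. Qed.

Theorem proposition3p1 :
  ~ exists phi : (nat -> R) -> (nat -> R),
      linear_on_linf phi /\ isometry_on_linf phi /\
      (forall x, bounded_seq x ->
         in_L_countable (phi x) \/ phi x = (fun _ => 0)).
Proof.
  intros [phi [Hlin [Hiso Hc]]]. pose proof Hlin as [Hb Hl].
  pose proof (phi_bound phi Hiso one 1 one_bnd) as Hu.
  assert (Hs : forall j k, Rabs (phi (rj j) k) <= 1)
    by (intro j; apply (phi_bound phi Hiso); apply rj_abs).
  pose (x := fun n => 2 + ser (fun j => rj j n) (fun j => rj_abs j n)).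
  assert (Hxa : forall N n, Rabs (x n - Zs N ptrue n) <= tail N).
  { intros N n. rewrite Zs_true. unfold x.
    pose proof (ser_spec (fun j => rj j n) (fun j => rj_abs j n) N) as H.
    match goal with |- Rabs ?a <= _ => match type of H with Rabs ?b <= _ =>
      replace a with b by ring end end. auto. }
  assert (Hxb : forall n, Rabs (x n) <= 2 + tail O).
  { intro n. pose proof (Hxa O n) as H. simpl in H. apply Rabs_le_iff in H.
    apply Rabs_le_iff. pose proof (tail_pos O); lra. }
  assert (Hx0 : x O >= 5/3).
  { pose proof (Hxa O O) as H. simpl in H. rewrite tail0 in H. apply Rabs_le_iff in H. lra. }
  assert (Hbx : bounded_seq x) by (apply (bnd_of _ _ Hxb)).
  assert (Hya : forall N k, Rabs (phi x k - Q (phi one k) (fun j => phi (rj j) k) ptrue N) <= tail N).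
  { intros N k.
    assert (Hd : forall n, Rabs (1 * x n + (-1) * Zs N ptrue n) <= tail N).
    { intro n. replace (1 * x n + (-1) * Zs N ptrue n) with (x n - Zs N ptrue n) by ring. auto. }
    pose proof (phi_bound phi Hiso _ _ Hd k) as H.
    rewrite Hl in H by (first [exact Hbx | apply (bnd_of _ _ (Zs_abs N ptrue))]).
    rewrite (phi_Zs phi Hlin) in H.
    match goal with |- Rabs ?a <= _ => match type of H with Rabs ?b <= _ =>
      replace a with b by ring end end. auto. }
  destruct (Hc x Hbx) as [[f Hf] | H0].
  2:{ destruct (sup_exists x _ Hxb) as [s Hs0].
      pose proof (Hiso x Hbx s Hs0) as Hi. rewrite H0 in Hi. destruct Hi as [_ Hl2].
      assert (s <= 0) by (apply Hl2; intros r [n ->]; rewrite Rabs_R0; lra).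
      destruct Hs0 as [Hub _]. assert (Hxs : Rabs (x O) <= s) by (apply Hub; eauto).
      rewrite Rabs_pos_eq in Hxs by lra. lra. }
  set (y := phi x) in *.
  pose (a_of := fun m => epsilon (inhabits 0) (fun a => acc_point y a /\ f a = m)).
  pose (t := fun i => if Nat.even i then Rabs (a_of (Nat.div2 i)) else Rabs (y (Nat.div2 i))).
  assert (ht1 : forall k, t (2 * k + 1)%nat = Rabs (y k)).
  { intro k; unfold t; rewrite Nat.even_odd, Nat.div2_odd'; reflexivity. }
  assert (ht0 : forall m, t (2 * m)%nat = Rabs (a_of m)).
  { intro m; unfold t; rewrite Nat.even_even, Nat.div2_double; reflexivity. }
  pose proof (V_pos t) as HVpos.
  assert (Claim : forall M e, 0 < e -> exists n, (M <= n)%nat /\ Rabs (Rabs (y n) - Vof t) < e).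
  { intros M e He.
    pose (g := c (2 * M + 1) / 2).
    assert (Hg : 0 < g) by (unfold g; pose proof (c_pos (2 * M + 1)); lra).
    pose (m := Rmin e g).
    assert (Hm : 0 < m) by (unfold m; apply Rmin_glb_lt; auto).
    assert (Hme : m <= e) by apply Rmin_l.
    assert (Hmg : m <= g) by apply Rmin_r.
    destruct (pow_lt_1_zero (/4) ltac:(rewrite Rabs_pos_eq; lra) (m/4) ltac:(lra)) as [N HN].
    specialize (HN N (le_n N)). rewrite Rabs_pos_eq in HN by (apply Rlt_le, pow4_pos).
    assert (HtN : tail N < m / 4).
    { unfold tail. pose proof (pow4_pos N). lra. }
    destruct (pattern_exists N (epsp t)) as [n0 Hn0].
    assert (Hz : Rabs (Zs N (epsp t) n0) = Bs N).
    { rewrite Zs_match by auto. apply Rabs_pos_eq. pose proof (Bs_ge2 N); lra. }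
    destruct (phi_witness phi Hiso (Zs N (epsp t)) (Bs N) n0 (m/4) (Zs_abs N _) Hz ltac:(lra))
      as [k Hk].
    rewrite (phi_Zs phi Hlin) in Hk. cbv beta in Hk.
    destruct (Q_approx (phi one k) (fun j => phi (rj j) k) (epsp t) (Hu k) (fun j => Hs j k) N)
      as [H1 H2].
    pose proof (Hya N k) as H3. pose proof (V_approx t N) as H4.
    pose proof (psum_bound (fun j => sgn (epsp t j)) (fun j => sgn_abs _) N) as H5.
    rewrite tail0 in H5. pose proof (tail_pos N).
    set (q := Q (phi one k) (fun j => phi (rj j) k) ptrue N) in *.
    set (qp := Q (phi one k) (fun j => phi (rj j) k) (epsp t) N) in *.
    set (w := 2 + psum (fun j => sgn (epsp t j)) N) in *.
    apply Rabs_le_iff in H5.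
    assert (Hw : 0 <= w) by (unfold w; lra).
    assert (Hqw : Rabs (Rabs q - w) < m / 4).
    { unfold Rabs at 1 in Hk. destruct (Rcase_abs qp).
      - pose proof (Rabs_triang_inv2 q (- w)) as T.
        rewrite Rabs_Ropp, (Rabs_pos_eq w Hw) in T.
        replace (q - - w) with (q + w) in T by ring. lra.
      - pose proof (Rabs_triang_inv2 q w) as T.
        rewrite (Rabs_pos_eq w Hw) in T. lra. }
    pose proof (Rabs_triang_inv2 (y k) q) as T.
    assert (Hfin : Rabs (Rabs (y k) - Vof t) < m).
    { apply Rabs_le_iff in H4; apply Rabs_le_iff in T;
      apply Rabs_lt_iff in Hqw; apply Rabs_lt_iff. lra. }
    exists k. split; [|lra].
    destruct (Nat.le_gt_cases M k) as [|Hlt]; auto. exfalso.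
    pose proof (V_gap t (2 * k + 1)) as G. rewrite ht1 in G.
    pose proof (c_mono (2 * k + 1) (2 * M + 1) ltac:(lia)).
    rewrite Rabs_minus_sym in G. unfold g in Hmg. lra. }
  assert (Hacc : exists a, acc_point y a /\ Rabs a = Vof t).
  { apply NNPP; intro Hn.
    assert (HA : ~ acc_point y (Vof t))
      by (intro HA; apply Hn; exists (Vof t); split; auto; apply Rabs_pos_eq; lra).
    assert (HB : ~ acc_point y (- Vof t))
      by (intro HB; apply Hn; exists (- Vof t); split; auto; rewrite Rabs_Ropp; apply Rabs_pos_eq; lra).
    unfold acc_point in HA, HB.
    destruct (not_all_ex_not _ _ HA) as [e1 He1]. apply imply_to_and in He1. destruct He1 as [He1p He1].
    destruct (not_all_ex_not _ _ He1) as [N1 HN1]. pose proof (not_ex_all_not _ _ HN1) as HN1'.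
    destruct (not_all_ex_not _ _ HB) as [e2 He2]. apply imply_to_and in He2. destruct He2 as [He2p He2].
    destruct (not_all_ex_not _ _ He2) as [N2 HN2]. pose proof (not_ex_all_not _ _ HN2) as HN2'.
    destruct (Claim (max N1 N2) (Rmin e1 e2) ltac:(apply Rmin_glb_lt; auto)) as [n [Hn1 Hn2]].
    pose proof (Rmin_l e1 e2). pose proof (Rmin_r e1 e2).
    apply Rabs_lt_iff in Hn2.
    destruct (Rle_dec 0 (y n)) as [Hy|Hy].
    - rewrite (Rabs_pos_eq _ Hy) in Hn2. apply (HN1' n). split; [lia|]. apply Rabs_lt_iff. lra.
    - rewrite (Rabs_left _ (Rnot_le_lt _ _ Hy)) in Hn2. apply (HN2' n). split; [lia|]. apply Rabs_lt_iff. lra. }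
  destruct Hacc as [a [Ha HaV]].
  assert (Hspec : acc_point y (a_of (f a)) /\ f (a_of (f a)) = f a).
  { unfold a_of. apply (epsilon_spec (inhabits 0) (fun b => acc_point y b /\ f b = f a)).
    exists a; auto. }
  destruct Hspec as [Hs1 Hs2].
  assert (Heq : a_of (f a) = a) by (apply Hf; auto).
  pose proof (V_gap t (2 * f a)) as G. rewrite ht0, Heq, HaV in G.
  unfold Rminus in G. rewrite Rplus_opp_r, Rabs_R0 in G.
  pose proof (c_pos (2 * f a)). lra.
Qed.
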